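(* Let $0<\rho\le 1/2$, $0<s\le1$, and let $A=2/(\rho s)$. For every twist system with parameter $\rho$ on $n\ge2$ points, its $s$-energy satisfies $$\mathcal{E}(s)\le \sum_{1\le i<j\le n}A^{\,j-i}.$$ In particular $\mathcal{E}(s)\le 2/(\rho s)$ if $n=2$, and $\mathcal{E}(s)< 2\,(2/(\rho s))^{n-1}$ if $n>2$.
   Context: A twist system with parameter $\rho\in(0,1/2]$ on $n$ points is a sequence of configurations $x^{(t)}=(x_1\le x_2\le\dots\le x_n)\in[0,1]^n$, $t\ge1$, such that each transition from $x=x^{(t)}$ to $y=x^{(t+1)}$ is as follows: some integers $1\le u<v\le n$ are chosen (depending on $t$), and for $u\le i\le v$ the twist of $x_i$ is the interval $$\tau_i=\bigl[x_u+\rho(x_{\min\{i+1,v\}}-x_u),\; x_v-\rho(x_v-x_{\max\{i-1,u\}})\bigr];$$ the new configuration must satisfy (i) $y_1\le\dots\le y_n$, and (ii) $y_i\in\tau_i$ for $u\le i\le v$ and $y_i=x_i$ otherwise. The choices of $u,v$ and of the $y_i$ are otherwise arbitrary. The $s$-energy of the twist system is $\mathcal{E}(s)=\sum_{t\ge1}(x_v-x_u)^s$, where $u,v$ are those chosen at step $t$ and $x=x^{(t)}$. *)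

(* Defs.v *)
From Stdlib Require Import Reals Lra Lia Arith.
Open Scope R_scope.

(* Real power d^s for d >= 0, s > 0, with the convention 0^s = 0
   (Stdlib's Rpower 0 s would be 1). *)
Definition rpow (d s : R) : R := if Rle_dec d 0 then 0 else Rpower d s.

Fixpoint rsum (f : nat -> R) (m : nat) : R :=
  match m with
  | O => 0
  | S k => rsum f k + f k
  end.

(* Points are indexed 1..n; a configuration is a function nat -> R,
   only its values at 1..n matter. *)
Definition config (n : nat) (x : nat -> R) : Prop :=
  (forall i, (1 <= i <= n)%nat -> 0 <= x i <= 1) /\
  (forall i, (1 <= i < n)%nat -> x i <= x (S i)).

Definition tau_lo (rho : R) (x : nat -> R) (u v i : nat) : R :=
  x u + rho * (x (Nat.min (S i) v) - x u).
Definition tau_hi (rho : R) (x : nat -> R) (u v i : nat) : R :=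
  x v - rho * (x v - x (Nat.max (i - 1) u)).

Definition twist_step (rho : R) (n : nat) (x y : nat -> R) (u v : nat) : Prop :=
  (1 <= u /\ u < v /\ v <= n)%nat /\
  (forall i, (1 <= i < n)%nat -> y i <= y (S i)) /\
  (forall i, (u <= i <= v)%nat -> tau_lo rho x u v i <= y i <= tau_hi rho x u v i) /\
  (forall i, (1 <= i <= n)%nat -> ~ (u <= i <= v)%nat -> y i = x i).

Definition twist_system (rho : R) (n : nat) (X : nat -> nat -> R) (U V : nat -> nat) : Prop :=
  forall t, (1 <= t)%nat ->
    config n (X t) /\ twist_step rho n (X t) (X (S t)) (U t) (V t).

Definition energy_partial (s : R) (X : nat -> nat -> R) (U V : nat -> nat) (T : nat) : R :=
  rsum (fun k => rpow (X (S k) (V (S k)) - X (S k) (U (S k))) s) T.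

(* sum_{1 <= i < j <= n} A^(j-i)  (indices shifted to 0..n-1) *)
Definition pair_sum (A : R) (n : nat) : R :=
  rsum (fun a => rsum (fun b => if Nat.ltb a b then A ^ (b - a) else 0) n) n.

(* Main.v *)
Require Import Defs.
From Stdlib Require Import Reals Lra Lia Psatz Arith.
Open Scope R_scope.

Lemma rpow_nonneg t s : 0 <= rpow t s.
Proof. unfold rpow. destruct (Rle_dec t 0). lra. unfold Rpower. left; apply exp_pos. Qed.

Lemma rpow_0 s : rpow 0 s = 0.
Proof. unfold rpow. destruct (Rle_dec 0 0); lra. Qed.

Lemma rpow_pos t s : 0 < t -> rpow t s = Rpower t s.
Proof. intros. unfold rpow. destruct (Rle_dec t 0); [lra|auto]. Qed.

Lemma rpow_mono s t1 t2 : 0 <= s -> t1 <= t2 -> rpow t1 s <= rpow t2 s.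
Proof.
  intros Hs H. unfold rpow. destruct (Rle_dec t1 0).
  - destruct (Rle_dec t2 0). lra. unfold Rpower; left; apply exp_pos.
  - destruct (Rle_dec t2 0). lra. apply Rle_Rpower_l; lra.
Qed.

Lemma rpow_le1 s t : 0 <= s -> t <= 1 -> rpow t s <= 1.
Proof.
  intros Hs H. unfold rpow. destruct (Rle_dec t 0). lra.
  assert (E : Rpower 1 s = 1) by (unfold Rpower; rewrite ln_1, Rmult_0_r; apply exp_0).
  rewrite <- E. apply Rle_Rpower_l; lra.
Qed.

Lemma bern z s : 0 < z -> 0 <= s <= 1 -> Rpower z s <= 1 + s * (z - 1).
Proof.
  intros Hz Hs. unfold Rpower. set (L := ln z).
  assert (Ez : z = exp L) by (unfold L; rewrite exp_ln; auto).
  set (g := exp (s * L)).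
  assert (Hg : 0 < g) by apply exp_pos.
  assert (E1 : z = exp ((1 - s) * L) * g).
  { unfold g. rewrite <- exp_plus. rewrite Ez at 1. f_equal. ring. }
  assert (E2 : 1 = exp (- s * L) * g).
  { unfold g. rewrite <- exp_plus. replace (- s * L + s * L) with 0 by ring. now rewrite exp_0. }
  assert (I1 := exp_ineq1_le ((1 - s) * L)).
  assert (I2 := exp_ineq1_le (- s * L)).
  assert (P1 : 0 <= g * s * (exp ((1 - s) * L) - (1 + (1 - s) * L))).
  { apply Rmult_le_pos; [apply Rmult_le_pos|]; lra. }
  assert (P2 : 0 <= g * (1 - s) * (exp (- s * L) - (1 + - s * L))).
  { apply Rmult_le_pos; [apply Rmult_le_pos|]; lra. }
  fold g. rewrite E1 at 1. replace (1 + s * (exp ((1 - s) * L) * g - 1)) with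
    (s * (exp ((1 - s) * L) * g) + (1 - s) * (exp (- s * L) * g)) by (rewrite <- E2; ring).
  nra.
Qed.

Lemma tangent a t s : 0 < a -> 0 <= t -> 0 < s <= 1 ->
  rpow t s <= rpow a s + s * rpow a s / a * (t - a).
Proof.
  intros Ha Ht Hs. rewrite (rpow_pos a) by auto.
  assert (Hp : 0 < Rpower a s) by (unfold Rpower; apply exp_pos).
  destruct (Req_dec t 0) as [->|Htn].
  - rewrite rpow_0. replace (Rpower a s + s * Rpower a s / a * (0 - a)) with (Rpower a s * (1 - s))
      by (field; lra). apply Rmult_le_pos; lra.
  - rewrite rpow_pos by lra.
    replace t with (a * (t / a)) at 1 by (field; lra).
    rewrite <- Rpower_mult_distr by (try apply Rdiv_lt_0_compat; lra).
    assert (B := bern (t / a) s ltac:(apply Rdiv_lt_0_compat; lra) ltac:(lra)).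
    replace (Rpower a s + s * Rpower a s / a * (t - a)) with (Rpower a s * (1 + s * (t / a - 1)))
      by (field; lra).
    apply Rmult_le_compat_l; lra.
Qed.

Lemma jensen3 s l1 l2 l3 t1 t2 t3 : 0 < s <= 1 -> 0 <= l1 -> 0 <= l2 -> 0 <= l3 ->
  l1 + l2 + l3 = 1 -> 0 <= t1 -> 0 <= t2 -> 0 <= t3 ->
  l1 * rpow t1 s + l2 * rpow t2 s + l3 * rpow t3 s <= rpow (l1 * t1 + l2 * t2 + l3 * t3) s.
Proof.
  intros Hs H1 H2 H3 Hl T1 T2 T3.
  set (a := l1 * t1 + l2 * t2 + l3 * t3).
  assert (A1 : 0 <= l1 * t1) by (apply Rmult_le_pos; lra).
  assert (A2 : 0 <= l2 * t2) by (apply Rmult_le_pos; lra).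
  assert (A3 : 0 <= l3 * t3) by (apply Rmult_le_pos; lra).
  destruct (Req_dec a 0) as [Ha0|Ha0].
  - assert (Z : forall l t, 0 <= l -> 0 <= t -> l * t = 0 -> l * rpow t s = 0).
    { intros l t Hl' Ht' E. destruct (Rmult_integral _ _ E) as [->| ->]. ring. rewrite rpow_0; ring. }
    rewrite (Z l1 t1), (Z l2 t2), (Z l3 t3) by (auto; unfold a in Ha0; lra).
    rewrite Ha0, rpow_0. lra.
  - assert (Ha : 0 < a) by (unfold a in *; lra).
    assert (G1 := tangent a t1 s Ha T1 Hs).
    assert (G2 := tangent a t2 s Ha T2 Hs).
    assert (G3 := tangent a t3 s Ha T3 Hs).
    set (c := s * rpow a s / a) in *.
    apply Rmult_le_compat_l with (r := l1) in G1; auto.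
    apply Rmult_le_compat_l with (r := l2) in G2; auto.
    apply Rmult_le_compat_l with (r := l3) in G3; auto.
    assert (E : l1 * (rpow a s + c * (t1 - a)) + l2 * (rpow a s + c * (t2 - a)) +
                l3 * (rpow a s + c * (t3 - a)) = rpow a s).
    { replace (l1 * (rpow a s + c * (t1 - a)) + l2 * (rpow a s + c * (t2 - a)) +
                l3 * (rpow a s + c * (t3 - a))) with
        ((l1 + l2 + l3) * rpow a s + c * (l1 * t1 + l2 * t2 + l3 * t3 - (l1 + l2 + l3) * a)) by ring.
      rewrite Hl. fold a. ring. }
    lra.
Qed.

Lemma bern_lo s d t : 0 < s <= 1 -> 0 < d -> 0 <= t <= d ->
  rpow (d - t) s <= rpow d s * (1 - s * t / d).
Proof.
  intros Hs Hd Ht. assert (Hp := rpow_nonneg d s).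
  destruct (Req_dec (d - t) 0) as [E|E].
  - rewrite E, rpow_0. replace (1 - s * t / d) with (1 - s) by (replace t with d by lra; field; lra).
    apply Rmult_le_pos; lra.
  - rewrite !rpow_pos by lra.
    replace (d - t) with (d * ((d - t) / d)) at 1 by (field; lra).
    rewrite <- Rpower_mult_distr by (try apply Rdiv_lt_0_compat; lra).
    assert (B := bern ((d - t) / d) s ltac:(apply Rdiv_lt_0_compat; lra) ltac:(lra)).
    apply Rmult_le_compat_l. unfold Rpower; left; apply exp_pos.
    replace (1 + s * ((d - t) / d - 1)) with (1 - s * t / d) in B by (field; lra). lra.
Qed.

Lemma bern_hi s d z : 0 < s <= 1 -> 0 < d -> 0 <= z <= d ->
  rpow d s * (1 - z / d) <= rpow (d - z) s.
Proof.
  intros Hs Hd Hz. assert (Hp := rpow_nonneg d s).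
  destruct (Req_dec (d - z) 0) as [E|E].
  - rewrite E, rpow_0. replace (1 - z / d) with 0 by (replace z with d by lra; field; lra). lra.
  - rewrite !rpow_pos by lra.
    set (q := (d - z) / d).
    assert (Hq : 0 < q) by (apply Rdiv_lt_0_compat; lra).
    assert (Hq1 : q <= 1) by (unfold q; apply Rmult_le_reg_r with d; [lra|]; field_simplify; lra).
    replace (d - z) with (d * q) by (unfold q; field; lra).
    rewrite <- Rpower_mult_distr by lra.
    replace (1 - z / d) with q by (unfold q; field; lra).
    apply Rmult_le_compat_l. unfold Rpower; left; apply exp_pos.
    unfold Rpower. rewrite <- (exp_ln q) at 1 by lra.
    assert (ln q <= 0) by (rewrite <- ln_1; destruct (Req_dec q 1) as [->|]; [lra| left; apply ln_increasing; lra]).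
    destruct (Req_dec (ln q) (s * ln q)) as [E'|E']; [rewrite <- E'; lra| left; apply exp_increasing; nra].
Qed.

Lemma keyK s xu xi xj xv : 0 < s <= 1 -> xu <= xi -> xi <= xj -> xj <= xv ->
  rpow (xv - xu) s - rpow (xj - xi) s <=
  / s * ((rpow (xv - xu) s - rpow (xj - xu) s) + (rpow (xv - xu) s - rpow (xv - xi) s)).
Proof.
  intros Hs H1 H2 H3. set (d := xv - xu).
  destruct (Req_dec d 0) as [E|E].
  - unfold d in *. assert (Ev : xv = xu) by lra. subst xv.
    replace (xu - xu) with 0 by lra. replace (xj - xi) with 0 by lra. replace (xj - xu) with 0 by lra.
    replace (xu - xi) with 0 by lra. rewrite rpow_0. lra.
  - assert (Hd : 0 < d) by (unfold d in *; lra).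
    assert (Lo1 := bern_lo s d (xv - xj) Hs Hd ltac:(unfold d; lra)).
    assert (Lo2 := bern_lo s d (xi - xu) Hs Hd ltac:(unfold d; lra)).
    assert (Hi := bern_hi s d ((xv - xj) + (xi - xu)) Hs Hd ltac:(unfold d; lra)).
    replace (d - (xv - xj)) with (xj - xu) in Lo1 by (unfold d; ring).
    replace (d - (xi - xu)) with (xv - xi) in Lo2 by (unfold d; ring).
    replace (d - (xv - xj + (xi - xu))) with (xj - xi) in Hi by (unfold d; ring).
    set (P := rpow d s) in *.
    assert (HP : 0 <= P) by apply rpow_nonneg.
    assert (R1 : / s * ((P - rpow (xj - xu) s) + (P - rpow (xv - xi) s)) >=
                 / s * (P * (s * (xv - xj) / d) + P * (s * (xi - xu) / d))).
    { apply Rle_ge, Rmult_le_compat_l. left; apply Rinv_0_lt_compat; lra. lra. }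
    replace (/ s * (P * (s * (xv - xj) / d) + P * (s * (xi - xu) / d))) with
      (P * ((xv - xj + (xi - xu)) / d)) in R1 by (field; split; lra).
    replace (P * (1 - (xv - xj + (xi - xu)) / d)) with (P - P * ((xv - xj + (xi - xu)) / d)) in Hi by ring.
    lra.
Qed.

Lemma lin_bound s a t e : 0 < s <= 1 -> 0 <= t <= a -> e <= a - t ->
  rpow e s <= rpow a s - s * rpow a s * t / a.
Proof.
  intros Hs Ht He. destruct (Req_dec a 0) as [E|E].
  - subst a. assert (t = 0) by lra. subst t. rewrite rpow_0.
    assert (rpow e s = 0) by (unfold rpow; destruct (Rle_dec e 0); [auto|lra]). rewrite H. replace (0 - s * 0 * 0 / 0) with 0 by (unfold Rdiv; ring). lra.
  - assert (Ha : 0 < a) by lra.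
    assert (B := bern_lo s a t Hs Ha Ht).
    assert (rpow e s <= rpow (a - t) s) by (apply rpow_mono; lra).
    replace (rpow a s - s * rpow a s * t / a) with (rpow a s * (1 - s * t / a)) by (field; lra). lra.
Qed.

Lemma lin_hi s a z : 0 < s <= 1 -> 0 <= z <= a ->
  rpow a s - rpow (a - z) s <= / s * (s * rpow a s * z / a).
Proof.
  intros Hs Hz. destruct (Req_dec a 0) as [E|E].
  - subst a. assert (z = 0) by lra. subst z. replace (0 - 0) with 0 by ring. rewrite rpow_0. replace (/ s * (s * 0 * 0 / 0)) with 0 by (unfold Rdiv; ring). lra.
  - assert (Ha : 0 < a) by lra.
    assert (B := bern_hi s a z Hs Ha Hz).
    replace (/ s * (s * rpow a s * z / a)) with (rpow a s * (z / a)) by (field; lra).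
    replace (rpow a s * (1 - z / a)) with (rpow a s - rpow a s * (z / a)) in B by ring. lra.
Qed.

Lemma rsum_ext f g m : (forall k, (k < m)%nat -> f k = g k) -> rsum f m = rsum g m.
Proof. induction m; simpl; intros; auto. rewrite IHm by (intros; apply H; lia). rewrite H by lia. auto. Qed.

Lemma rsum_le f g m : (forall k, (k < m)%nat -> f k <= g k) -> rsum f m <= rsum g m.
Proof. induction m; simpl; intros; [lra|]. assert (H1 := H m ltac:(lia)). assert (rsum f m <= rsum g m) by (apply IHm; intros; apply H; lia). lra. Qed.

Lemma rsum_nonneg f m : (forall k, (k < m)%nat -> 0 <= f k) -> 0 <= rsum f m.
Proof. intros. replace 0 with (rsum (fun _ => 0) m). apply rsum_le; auto. induction m; simpl; auto. rewrite IHm; [lra|intros; apply H; lia]. Qed.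

Lemma rsum_lin c1 c2 f g m : rsum (fun k => c1 * f k + c2 * g k) m = c1 * rsum f m + c2 * rsum g m.
Proof. induction m; simpl. ring. rewrite IHm. ring. Qed.

Lemma rsum_scal c f m : rsum (fun k => c * f k) m = c * rsum f m.
Proof. induction m; simpl. ring. rewrite IHm. ring. Qed.

Lemma rsum_zero f m : (forall k, (k < m)%nat -> f k = 0) -> rsum f m = 0.
Proof. induction m; simpl; intros; auto. rewrite IHm, H by (try intros; try apply H; lia). ring. Qed.

Lemma rsum_term f m k : (forall k, (k < m)%nat -> 0 <= f k) -> (k < m)%nat -> f k <= rsum f m.
Proof.
  induction m; intros H Hk. lia. simpl.
  destruct (Nat.eq_dec k m) as [->|]. assert (0 <= rsum f m) by (apply rsum_nonneg; intros; apply H; lia). lra.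
  assert (f k <= rsum f m) by (apply IHm; [intros; apply H; lia| lia]). assert (0 <= f m) by (apply H; lia). lra.
Qed.

Lemma rsum_shift f m : rsum f (S m) = f O + rsum (fun k => f (S k)) m.
Proof. induction m. simpl. ring. change (rsum f (S (S m))) with (rsum f (S m) + f (S m)). rewrite IHm. simpl. ring. Qed.

Definition PS (A : R) (n : nat) (F : nat -> nat -> R) : R :=
  rsum (fun a => rsum (fun b => if Nat.ltb a b then A ^ (b - a) * F (S a) (S b) else 0) n) n.

Lemma PS_le A n F G : 0 <= A -> (forall i j, (1 <= i)%nat -> (i < j)%nat -> (j <= n)%nat -> F i j <= G i j) ->
  PS A n F <= PS A n G.
Proof.
  intros HA H. unfold PS. apply rsum_le; intros a Ha. apply rsum_le; intros b Hb.
  destruct (Nat.ltb_spec a b). apply Rmult_le_compat_l. apply pow_le; auto. apply H; lia. lra.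
Qed.

Lemma PS_nonneg A n F : 0 <= A -> (forall i j, (1 <= i)%nat -> (i < j)%nat -> (j <= n)%nat -> 0 <= F i j) ->
  0 <= PS A n F.
Proof.
  intros HA H. unfold PS. apply rsum_nonneg; intros a Ha. apply rsum_nonneg; intros b Hb.
  destruct (Nat.ltb_spec a b). apply Rmult_le_pos. apply pow_le; auto. apply H; lia. lra.
Qed.

Lemma PS_lin A n c1 c2 F G : PS A n (fun i j => c1 * F i j + c2 * G i j) = c1 * PS A n F + c2 * PS A n G.
Proof.
  unfold PS. rewrite <- rsum_lin. apply rsum_ext; intros a Ha. rewrite <- rsum_lin.
  apply rsum_ext; intros b Hb. destruct (Nat.ltb a b); ring.
Qed.

Lemma PS_term A n F a b : 0 <= A -> (forall i j, 0 <= F i j) -> (a < b)%nat -> (b < n)%nat ->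
  A ^ (b - a) * F (S a) (S b) <= PS A n F.
Proof.
  intros HA HF Hab Hb. unfold PS.
  assert (T : forall a b, 0 <= (if Nat.ltb a b then A ^ (b - a) * F (S a) (S b) else 0)).
  { intros. destruct (Nat.ltb a0 b0). apply Rmult_le_pos; [apply pow_le; auto| auto]. lra. }
  set (g := fun a => rsum (fun b => if Nat.ltb a b then A ^ (b - a) * F (S a) (S b) else 0) n).
  apply Rle_trans with (g a).
  - unfold g. set (h := fun b => if Nat.ltb a b then A ^ (b - a) * F (S a) (S b) else 0).
    apply Rle_trans with (h b).
    + unfold h. destruct (Nat.ltb_spec a b); [lra | lia].
    + apply rsum_term; auto. intros; unfold h; apply T.
  - apply rsum_term; [|lia]. intros; unfold g; apply rsum_nonneg; intros; apply T.
Qed.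

Lemma PS_shiftj A n G : 0 < A -> (forall i j, 0 <= G i j) -> (forall i, G i (S n) = 0) ->
  PS A n (fun i j => G i (S j)) <= / A * PS A n G.
Proof.
  intros HA HG Hn. unfold PS. rewrite <- rsum_scal.
  apply rsum_le; intros a Ha.
  set (phi := fun b => if Nat.ltb a b then A ^ (b - a) * G (S a) (S b) else 0).
  assert (Hphi : forall b, 0 <= phi b).
  { intros; unfold phi; destruct (Nat.ltb a b); [apply Rmult_le_pos; [apply pow_le; lra|auto]|lra]. }
  apply Rle_trans with (/ A * rsum (fun b => phi (S b)) n).
  { rewrite <- rsum_scal.
    apply rsum_le; intros b Hb. unfold phi. destruct (Nat.ltb_spec a b).
    - destruct (Nat.ltb_spec a (S b)); [|lia]. replace (S b - a)%nat with (S (b - a)) by lia.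
      simpl. right. field. lra.
    - assert (0 <= phi (S b)) by apply Hphi. unfold phi in H0.
      assert (0 < / A) by (apply Rinv_0_lt_compat; lra). nra. }
  assert (E : rsum (fun b => phi (S b)) n = rsum phi (S n) - phi O) by (rewrite rsum_shift; ring).
  rewrite E. change (rsum phi (S n)) with (rsum phi n + phi n). assert (phi n = 0) by (unfold phi; rewrite Hn; destruct (Nat.ltb a n); ring).
  assert (0 <= phi O) by apply Hphi. assert (0 < / A) by (apply Rinv_0_lt_compat; lra).
  nra.
Qed.

Lemma PS_shifti A n H : 0 < A -> (1 <= n)%nat -> (forall i j, 0 <= H i j) -> (forall j, H O j = 0) ->
  PS A n (fun i j => H (Nat.pred i) j) <= / A * PS A n H.
Proof.
  intros HA Hn1 HH H0. unfold PS. simpl Nat.pred.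
  destruct n as [|n']; [lia|].
  set (psi := fun a => rsum (fun b => if Nat.ltb a b then A ^ (b - a) * H (S a) (S b) else 0) (S n')).
  assert (Hpsi : forall a, 0 <= psi a).
  { intros; unfold psi; apply rsum_nonneg; intros; destruct (Nat.ltb a k); [apply Rmult_le_pos; [apply pow_le; lra|auto]|lra]. }
  rewrite rsum_shift. fold psi.
  assert (Z : rsum (fun b => if Nat.ltb 0 b then A ^ (b - 0) * H 0%nat (S b) else 0) (S n') = 0).
  { apply rsum_zero; intros. rewrite H0. destruct (Nat.ltb 0 k); ring. }
  rewrite Z, Rplus_0_l.
  apply Rle_trans with (/ A * rsum psi n').
  { rewrite <- rsum_scal.
    apply rsum_le; intros a Ha. unfold psi.
    rewrite <- rsum_scal.
    apply rsum_le; intros b Hb. destruct (Nat.ltb_spec (S a) b).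
    - destruct (Nat.ltb_spec a b); [|lia]. replace (b - a)%nat with (S (b - S a)) by lia.
      simpl. right. field. lra.
    - destruct (Nat.ltb a b). assert (0 < / A) by (apply Rinv_0_lt_compat; lra).
      assert (0 <= A ^ (b - a) * H (S a) (S b)) by (apply Rmult_le_pos; [apply pow_le; lra|auto]). nra. lra. }
  simpl. assert (0 <= psi n') by apply Hpsi. assert (0 < / A) by (apply Rinv_0_lt_compat; lra). nra.
Qed.

Lemma sorted_mono n x : (forall i, (1 <= i < n)%nat -> x i <= x (S i)) ->
  forall p q, (1 <= p)%nat -> (p <= q)%nat -> (q <= n)%nat -> x p <= x q.
Proof.
  intros H p q; induction q; intros. lia.
  destruct (Nat.eq_dec p (S q)). subst; lra.
  apply Rle_trans with (x q); [apply IHq; lia | apply H; lia].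
Qed.

Definition gg s (x : nat -> R) u v i j :=
  if andb (Nat.leb u j) (Nat.leb j v) then
    s * rpow (x v - x (Nat.min i u)) s * (x v - x (Nat.max (j - 1) u)) / (x v - x (Nat.min i u)) else 0.
Definition hh s (x : nat -> R) u v i j :=
  if andb (Nat.leb u i) (Nat.leb i v) then
    s * rpow (x (Nat.max j v) - x u) s * (x (Nat.min (S i) v) - x u) / (x (Nat.max j v) - x u) else 0.
Definition kk s (x : nat -> R) u v i j :=
  if orb (andb (Nat.leb u i) (Nat.leb i v)) (andb (Nat.leb u j) (Nat.leb j v)) then rpow (x (Nat.max j v) - x (Nat.min i u)) s - rpow (x j - x i) s else 0.

Lemma credit_nonneg s a b : 0 <= s -> 0 <= b -> 0 <= s * rpow a s * b / a.
Proof.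
  intros Hs Hb. destruct (Rle_dec a 0).
  - assert (rpow a s = 0) by (unfold rpow; destruct (Rle_dec a 0); [auto|lra]).
    rewrite H. unfold Rdiv. rewrite Rmult_0_r, !Rmult_0_l. lra.
  - unfold Rdiv. apply Rmult_le_pos; [|left; apply Rinv_0_lt_compat; lra].
    apply Rmult_le_pos; auto. apply Rmult_le_pos; auto. apply rpow_nonneg.
Qed.

Lemma inb_t u v i : (u <= i <= v)%nat -> (andb (Nat.leb u i) (Nat.leb i v)) = true.
Proof. intros. apply andb_true_intro; split; apply Nat.leb_le; lia. Qed.
Lemma inb_f u v i : ~ (u <= i <= v)%nat -> (andb (Nat.leb u i) (Nat.leb i v)) = false.
Proof. intros. destruct (Nat.leb_spec u i); destruct (Nat.leb_spec i v); simpl; auto; lia. Qed.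

Lemma gg_nonneg s n x u v i j : 0 <= s -> (forall k, (1 <= k < n)%nat -> x k <= x (S k)) ->
  (1 <= u)%nat -> (v <= n)%nat -> 0 <= gg s x u v i j.
Proof.
  intros Hs Hx Hu Hv. unfold gg. destruct (Nat.leb_spec u j); destruct (Nat.leb_spec j v); cbn [andb orb]; try lra.
  assert (x (Nat.max (j - 1) u) <= x v) by (apply (sorted_mono n); auto; lia).
  apply credit_nonneg; lra.
Qed.

Lemma hh_nonneg s n x u v i j : 0 <= s -> (forall k, (1 <= k < n)%nat -> x k <= x (S k)) ->
  (1 <= u)%nat -> (v <= n)%nat -> 0 <= hh s x u v i j.
Proof.
  intros Hs Hx Hu Hv. unfold hh. destruct (Nat.leb_spec u i); destruct (Nat.leb_spec i v); cbn [andb orb]; try lra.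
  assert (x u <= x (Nat.min (S i) v)) by (apply (sorted_mono n); auto; lia).
  apply credit_nonneg; lra.
Qed.

Lemma P1 rho s n x y u v i j : 0 < rho <= 1/2 -> 0 < s <= 1 -> config n x ->
  twist_step rho n x y u v -> (1 <= i)%nat -> (i < j)%nat -> (j <= n)%nat ->
  rho * (gg s x u v i j + hh s x u v i j) - kk s x u v i j <= rpow (x j - x i) s - rpow (y j - y i) s.
Proof.
  intros Hr Hs [Hb Hx] [[Hu [Huv Hv]] [Hy [Htw Hout]]] Hi Hij Hj.
  assert (M := sorted_mono n x Hx). assert (My := sorted_mono n y Hy).
  unfold gg, hh, kk.
  destruct (le_lt_dec u i); destruct (le_lt_dec i v); destruct (le_lt_dec u j); destruct (le_lt_dec j v);
    try (exfalso; lia).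
  -
    rewrite !inb_t by lia. cbn [andb orb].
    replace (Nat.min i u) with u by lia. replace (Nat.max j v) with v by lia.
    set (m := Nat.max (j - 1) u). set (p := Nat.min (S i) v).
    destruct (Htw j ltac:(lia)) as [_ Hyj]. destruct (Htw i ltac:(lia)) as [Hyi _].
    unfold tau_hi, tau_lo in *. fold m in Hyj. fold p in Hyi.
    assert (x u <= x v) by (apply M; lia). assert (x u <= x m) by (apply M; lia).
    assert (x p <= x v) by (apply M; lia).
    assert (x m <= x v) by (apply M; lia). assert (x u <= x p) by (apply M; lia).
    assert (L := lin_bound s (x v - x u) (rho * (x v - x m) + rho * (x p - x u)) (y j - y i) Hs
      ltac:(split; nra) ltac:(lra)).
    replace (s * rpow (x v - x u) s * (rho * (x v - x m) + rho * (x p - x u)) / (x v - x u)) with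
      (rho * (s * rpow (x v - x u) s * (x v - x m) / (x v - x u) +
              s * rpow (x v - x u) s * (x p - x u) / (x v - x u))) in L by (unfold Rdiv; ring).
    lra.
  -
    rewrite (inb_t u v i) by lia. rewrite (inb_f u v j) by lia. cbn [andb orb].
    replace (Nat.min i u) with u by lia. replace (Nat.max j v) with j by lia.
    set (p := Nat.min (S i) v).
    destruct (Htw i ltac:(lia)) as [Hyi _]. unfold tau_lo in Hyi. fold p in Hyi.
    rewrite (Hout j) by lia.
    assert (x u <= x j) by (apply M; lia). assert (x p <= x j) by (apply M; lia).
    assert (x u <= x p) by (apply M; lia).
    assert (L := lin_bound s (x j - x u) (rho * (x p - x u)) (x j - y i) Hs
      ltac:(split; nra) ltac:(lra)).
    replace (s * rpow (x j - x u) s * (rho * (x p - x u)) / (x j - x u)) with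
      (rho * (s * rpow (x j - x u) s * (x p - x u) / (x j - x u))) in L by (unfold Rdiv; ring).
    lra.
  -
    rewrite !inb_f by lia. cbn [andb orb]. rewrite (Hout i), (Hout j) by lia. lra.
  -
    rewrite (inb_f u v i) by lia. rewrite (inb_t u v j) by lia. cbn [andb orb].
    replace (Nat.min i u) with i by lia. replace (Nat.max j v) with v by lia.
    set (m := Nat.max (j - 1) u).
    destruct (Htw j ltac:(lia)) as [_ Hyj]. unfold tau_hi in Hyj. fold m in Hyj.
    rewrite (Hout i) by lia.
    assert (x i <= x v) by (apply M; lia). assert (x i <= x m) by (apply M; lia).
    assert (x m <= x v) by (apply M; lia).
    assert (L := lin_bound s (x v - x i) (rho * (x v - x m)) (y j - x i) Hs
      ltac:(split; nra) ltac:(lra)).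
    replace (s * rpow (x v - x i) s * (rho * (x v - x m)) / (x v - x i)) with
      (rho * (s * rpow (x v - x i) s * (x v - x m) / (x v - x i))) in L by (unfold Rdiv; ring).
    lra.
  -
    rewrite !inb_f by lia. cbn [andb orb]. rewrite (Hout i), (Hout j) by lia. lra.
  -
    rewrite !inb_f by lia. cbn [andb orb]. rewrite (Hout i), (Hout j) by lia. lra.
Qed.

Lemma P2 rho s n x y u v i j : 0 < rho <= 1/2 -> 0 < s <= 1 -> config n x ->
  twist_step rho n x y u v -> (1 <= i)%nat -> (i < j)%nat -> (j <= n)%nat ->
  kk s x u v i j <= / s * (gg s x u v i (S j) + hh s x u v (Nat.pred i) j).
Proof.
  intros Hr Hs [Hb Hx] [[Hu [Huv Hv]] [Hy [Htw Hout]]] Hi Hij Hj.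
  assert (M := sorted_mono n x Hx).
  assert (G0 := gg_nonneg s n x u v i (S j) ltac:(lra) Hx Hu Hv).
  assert (H0 := hh_nonneg s n x u v (Nat.pred i) j ltac:(lra) Hx Hu Hv).
  assert (Is : 0 < / s) by (apply Rinv_0_lt_compat; lra).
  assert (R0 : 0 <= / s * (gg s x u v i (S j) + hh s x u v (Nat.pred i) j)) by nra.
  unfold kk.
  destruct (le_lt_dec u i); destruct (le_lt_dec i v); destruct (le_lt_dec u j); destruct (le_lt_dec j v);
    try (exfalso; lia).
  -
    rewrite (inb_t u v i) by lia. cbn [andb orb].
    replace (Nat.min i u) with u by lia. replace (Nat.max j v) with v by lia.
    assert (Eg : gg s x u v i (S j) = s * rpow (x v - x u) s * (x v - x j) / (x v - x u)).
    { unfold gg. destruct (Nat.eq_dec j v).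
      - subst j. rewrite (inb_f u v (S v)) by lia. cbn [andb]. unfold Rdiv. replace (x v - x v) with 0 by ring. ring.
      - rewrite (inb_t u v (S j)) by lia. cbn [andb]. replace (Nat.min i u) with u by lia.
        replace (Nat.max (S j - 1) u) with j by lia. auto. }
    assert (Eh : hh s x u v (Nat.pred i) j = s * rpow (x v - x u) s * (x i - x u) / (x v - x u)).
    { unfold hh. destruct (Nat.eq_dec i u).
      - subst i. rewrite (inb_f u v (Nat.pred u)) by lia. cbn [andb]. unfold Rdiv. replace (x u - x u) with 0 by ring. ring.
      - rewrite (inb_t u v (Nat.pred i)) by lia. cbn [andb]. replace (Nat.max j v) with v by lia.
        replace (Nat.min (S (Nat.pred i)) v) with i by lia. auto. }
    rewrite Eg, Eh.
    assert (x u <= x i) by (apply M; lia). assert (x i <= x j) by (apply M; lia). assert (x j <= x v) by (apply M; lia).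
    assert (L := lin_hi s (x v - x u) ((x v - x j) + (x i - x u)) Hs ltac:(lra)).
    replace (x v - x u - (x v - x j + (x i - x u))) with (x j - x i) in L by ring.
    replace (s * rpow (x v - x u) s * (x v - x j + (x i - x u)) / (x v - x u)) with
      (s * rpow (x v - x u) s * (x v - x j) / (x v - x u) + s * rpow (x v - x u) s * (x i - x u) / (x v - x u))
      in L by (unfold Rdiv; ring).
    lra.
  -
    rewrite (inb_t u v i) by lia. cbn [andb orb].
    replace (Nat.min i u) with u by lia. replace (Nat.max j v) with j by lia.
    destruct (Nat.eq_dec i u). { subst i. replace (x j - x u - (x j - x u)) with 0 by ring. lra. }
    assert (Eh : hh s x u v (Nat.pred i) j = s * rpow (x j - x u) s * (x i - x u) / (x j - x u)).
    { unfold hh. rewrite (inb_t u v (Nat.pred i)) by lia. cbn [andb]. replace (Nat.max j v) with j by lia.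
      replace (Nat.min (S (Nat.pred i)) v) with i by lia. auto. }
    assert (x u <= x i) by (apply M; lia). assert (x i <= x j) by (apply M; lia).
    assert (L := lin_hi s (x j - x u) (x i - x u) Hs ltac:(lra)).
    replace (x j - x u - (x i - x u)) with (x j - x i) in L by ring.
    rewrite Eh in H0. nra.
  -
    rewrite !inb_f by lia. cbn [andb orb]. lra.
  -
    rewrite (inb_f u v i) by lia. rewrite (inb_t u v j) by lia. cbn [andb orb].
    replace (Nat.min i u) with i by lia. replace (Nat.max j v) with v by lia.
    destruct (Nat.eq_dec j v). { subst j. replace (x v - x i - (x v - x i)) with 0 by ring. lra. }
    assert (Eg : gg s x u v i (S j) = s * rpow (x v - x i) s * (x v - x j) / (x v - x i)).
    { unfold gg. rewrite (inb_t u v (S j)) by lia. cbn [andb]. replace (Nat.min i u) with i by lia.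
      replace (Nat.max (S j - 1) u) with j by lia. auto. }
    assert (x i <= x j) by (apply M; lia). assert (x j <= x v) by (apply M; lia).
    assert (L := lin_hi s (x v - x i) (x v - x j) Hs ltac:(lra)).
    replace (x v - x i - (x v - x j)) with (x j - x i) in L by ring.
    rewrite Eg in G0. nra.
  - rewrite !inb_f by lia. cbn [andb orb]. lra.
  - rewrite !inb_f by lia. cbn [andb orb]. lra.
Qed.

Definition Phi s A n (x : nat -> R) := PS A n (fun i j => rpow (x j - x i) s).

Lemma step_dec rho s n x y u v : 0 < rho <= 1/2 -> 0 < s <= 1 -> (2 <= n)%nat -> config n x ->
  twist_step rho n x y u v ->
  Phi s (2 / (rho * s)) n y <= Phi s (2 / (rho * s)) n x - rpow (x v - x u) s.
Proof.
  intros Hr Hs Hn Hc Ht. pose proof Ht as Ht0. pose proof Hc as Hc0.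
  set (A := 2 / (rho * s)).
  assert (HA : 0 < A) by (unfold A; apply Rdiv_lt_0_compat; nra).
  destruct Hc as [Hb Hx]. destruct Ht as [[Hu [Huv Hv]] _].
  set (g := gg s x u v). set (h := hh s x u v). set (k := kk s x u v).
  assert (Gn : forall i j, 0 <= g i j) by (intros; apply (gg_nonneg s n); auto; lra).
  assert (Hn' : forall i j, 0 <= h i j) by (intros; apply (hh_nonneg s n); auto; lra).
  assert (E1 : Phi s A n x - Phi s A n y >= rho * (PS A n g + PS A n h) - PS A n k).
  { unfold Phi. replace (PS A n (fun i j => rpow (x j - x i) s) - PS A n (fun i j => rpow (y j - y i) s))
      with (PS A n (fun i j => 1 * rpow (x j - x i) s + (-1) * rpow (y j - y i) s)) by (rewrite PS_lin; ring).
    replace (rho * (PS A n g + PS A n h) - PS A n k) with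
      (rho * PS A n (fun i j => 1 * g i j + 1 * h i j) + (-1) * PS A n k) by (rewrite PS_lin; ring).
    rewrite <- PS_lin. apply Rle_ge, PS_le; [lra|]. intros i j Hi Hij Hj.
    assert (P := P1 rho s n x y u v i j Hr Hs Hc0 Ht0 Hi Hij Hj).
    fold g h k in P. lra. }
  assert (E2 : PS A n k <= / s * (/ A * PS A n g + / A * PS A n h)).
  { apply Rle_trans with (PS A n (fun i j => / s * g i (S j) + / s * h (Nat.pred i) j)).
    - apply PS_le; [lra|]. intros i j Hi Hij Hj.
      assert (P := P2 rho s n x y u v i j Hr Hs Hc0 Ht0 Hi Hij Hj).
      fold g h k in P. lra.
    - rewrite PS_lin. rewrite <- Rmult_plus_distr_l. apply Rmult_le_compat_l.
      left; apply Rinv_0_lt_compat; lra.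
      assert (S1 := PS_shiftj A n g HA Gn ltac:(intros; unfold g, gg; rewrite (inb_f u v (S n)) by lia; auto)).
      assert (S2 := PS_shifti A n h HA ltac:(lia) Hn' ltac:(intros; unfold h, hh; rewrite (inb_f u v 0) by lia; auto)).
      lra. }
  assert (E3 : / s * / A = rho / 2) by (unfold A; field; lra).
  assert (E4 : A * (s * rpow (x v - x u) s) <= PS A n g).
  { assert (T := PS_term A n g (u - 1) u ltac:(lra) Gn ltac:(lia) ltac:(lia)).
    replace (S (u - 1)) with u in T by lia. replace (u - (u - 1))%nat with 1%nat in T by lia.
    replace (g u (S u)) with (s * rpow (x v - x u) s) in T. lra.
    unfold g, gg. rewrite (inb_t u v (S u)) by lia. cbn [andb].
    replace (Nat.min u u) with u by lia. replace (Nat.max (S u - 1) u) with u by lia.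
    destruct (Req_dec (x v - x u) 0) as [Z|Z].
    - rewrite Z, rpow_0. unfold Rdiv. ring.
    - field. auto. }
  assert (PS A n h >= 0) by (apply Rle_ge, PS_nonneg; [lra| intros; auto]).
  assert (E5 : A * (s * rpow (x v - x u) s) * (rho / 2) = rpow (x v - x u) s) by (unfold A; field; lra).
  assert (PS A n k <= rho / 2 * (PS A n g + PS A n h)) by (rewrite <- E3; nra).
  nra.
Qed.

Lemma Phi_nonneg s A n x : 0 <= A -> 0 <= Phi s A n x.
Proof. intros. unfold Phi. apply PS_nonneg; auto. intros; apply rpow_nonneg. Qed.

Lemma Phi_le s A n x : 0 <= A -> 0 <= s -> config n x -> Phi s A n x <= pair_sum A n.
Proof.
  intros HA Hs [Hb _]. unfold Phi, PS, pair_sum. apply rsum_le; intros a Ha. apply rsum_le; intros b Hb'.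
  destruct (Nat.ltb a b); [|lra].
  assert (rpow (x (S b) - x (S a)) s <= 1).
  { apply rpow_le1; auto. assert (H1 := Hb (S b) ltac:(lia)). assert (H2 := Hb (S a) ltac:(lia)). lra. }
  assert (0 <= A ^ (b - a)) by (apply pow_le; auto). nra.
Qed.

Lemma telescope rho s n X U V : 0 < rho <= 1/2 -> 0 < s <= 1 -> (2 <= n)%nat ->
  twist_system rho n X U V -> forall T,
  energy_partial s X U V T + Phi s (2 / (rho * s)) n (X (S T)) <= Phi s (2 / (rho * s)) n (X 1%nat).
Proof.
  intros Hr Hs Hn Hsys T. induction T.
  - unfold energy_partial. simpl. lra.
  - unfold energy_partial in *. simpl rsum.
    destruct (Hsys (S T) ltac:(lia)) as [Hc Ht].
    assert (D := step_dec rho s n _ _ _ _ Hr Hs Hn Hc Ht). lra.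
Qed.

Definition W (A : R) n := rsum (fun a => A ^ (n - a)) n.

Lemma pair_sum_S A n : pair_sum A (S n) = pair_sum A n + W A n.
Proof.
  unfold pair_sum, W.
  set (Q := fun a m => rsum (fun b : nat => if Nat.ltb a b then A ^ (b - a) else 0) m).
  change (rsum (fun a => Q a (S n)) (S n) = rsum (fun a => Q a n) n + rsum (fun a => A ^ (n - a)) n).
  change (rsum (fun a => Q a (S n)) (S n)) with (rsum (fun a => Q a (S n)) n + Q n (S n)).
  assert (Z : Q n (S n) = 0).
  { unfold Q. apply rsum_zero. intros. destruct (Nat.ltb_spec n k); [lia|auto]. }
  rewrite Z, Rplus_0_r.
  replace (rsum (fun a => Q a (S n)) n) with (rsum (fun a => 1 * Q a n + 1 * A ^ (n - a)) n).
  { rewrite rsum_lin. ring. }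
  apply rsum_ext. intros a Ha. unfold Q. change (rsum ?f (S n)) with (rsum f n + f n).
  cbv beta. destruct (Nat.ltb_spec a n); [|lia]. ring.
Qed.

Lemma W_eq A n : W A n * (A - 1) = A ^ (S n) - A.
Proof.
  induction n. unfold W; simpl. ring.
  assert (E : W A (S n) = A * W A n + A).
  { unfold W. change (rsum ?f (S n)) with (rsum f n + f n). cbv beta. replace (S n - n)%nat with 1%nat by lia.
    replace (rsum (fun a => A ^ (S n - a)) n) with (rsum (fun a => A * A ^ (n - a)) n).
    rewrite rsum_scal. simpl. ring.
    apply rsum_ext. intros. replace (S n - k)%nat with (S (n - k)) by lia. simpl. ring. }
  rewrite E. replace ((A * W A n + A) * (A - 1)) with (A * (W A n * (A - 1)) + A * (A - 1)) by ring.
  rewrite IHn. simpl. ring.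
Qed.

Lemma pair_sum_bound A n : 4 <= A -> (2 <= n)%nat -> pair_sum A n <= 16 / 9 * A ^ (n - 1).
Proof.
  intros HA Hn. induction n. lia.
  destruct (Nat.eq_dec n 1) as [->|Hn1].
  - unfold pair_sum. simpl. lra.
  - rewrite pair_sum_S. assert (IH := IHn ltac:(lia)).
    assert (WE := W_eq A n).
    replace (S n - 1)%nat with n by lia.
    assert (En : A ^ n = A * A ^ (n - 1)) by (replace n with (S (n - 1)) at 1 by lia; reflexivity).
    assert (P : 0 < A ^ (n - 1)) by (apply pow_lt; lra).
    assert (WS : A ^ S n = A * A ^ n) by reflexivity.
    assert (W A n <= 4 / 3 * A ^ n).
    { apply Rmult_le_reg_r with (A - 1). lra. rewrite WE. rewrite WS, En.
      assert (0 <= A * ((A - 4) * A ^ (n - 1))) by (apply Rmult_le_pos; [lra| apply Rmult_le_pos; lra]). nra. }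
    rewrite En in *. nra.
Qed.

Theorem mainTheorem4 (rho s : R) (n : nat) (X : nat -> nat -> R) (U V : nat -> nat) :
  0 < rho -> rho <= 1/2 -> 0 < s -> s <= 1 -> (2 <= n)%nat ->
  twist_system rho n X U V ->
  (forall T, energy_partial s X U V T <= pair_sum (2 / (rho * s)) n) /\
  (n = 2%nat -> forall T, energy_partial s X U V T <= 2 / (rho * s)) /\
  ((2 < n)%nat -> exists B, B < 2 * (2 / (rho * s)) ^ (n - 1) /\
      forall T, energy_partial s X U V T <= B).
Proof.
  intros H1 H2 H3 H4 Hn Hsys.
  set (A := 2 / (rho * s)).
  assert (HA : 4 <= A).
  { unfold A. apply Rmult_le_reg_r with (rho * s). nra. unfold Rdiv. rewrite Rmult_assoc, Rinv_l by nra. nra. }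
  assert (Main : forall T, energy_partial s X U V T <= pair_sum A n).
  { intros T. assert (Tl := telescope rho s n X U V ltac:(lra) ltac:(lra) Hn Hsys T).
    assert (0 <= Phi s A n (X (S T))) by (apply Phi_nonneg; lra).
    destruct (Hsys 1%nat ltac:(lia)) as [Hc _].
    assert (Phi s A n (X 1%nat) <= pair_sum A n) by (apply Phi_le; auto; lra).
    fold A in Tl. lra. }
  split; [exact Main|split].
  - intros -> T. rewrite (Main T). unfold pair_sum. simpl. lra.
  - intros Hn2. exists (pair_sum A n). split; auto.
    assert (B := pair_sum_bound A n HA Hn).
    assert (0 < A ^ (n - 1)) by (apply pow_lt; lra). lra.
Qed.
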